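(* If $G$ is a countably infinite connected HE-homogeneous graph, then $G$ is MB-homogeneous.
   Context: All graphs are undirected and loopless; subgraphs are induced. A homomorphism maps adjacent vertices to adjacent vertices; a monomorphism is an injective homomorphism; a bimorphism of $G$ is a bijective endomorphism $G\to G$. $G$ is HE-homogeneous if every homomorphism between finite induced subgraphs of $G$ is the restriction of a surjective endomorphism of $G$; $G$ is MB-homogeneous if every monomorphism between finite induced subgraphs of $G$ is the restriction of a bimorphism of $G$. *)

(* Defs.v *)
From Stdlib Require Import List Relations.
Set Implicit Arguments.

Section Graphs.
Variable V : Type.
Variable E : V -> V -> Prop.

Definition simple_graph : Prop :=
  (forall x y, E x y -> E y x) /\ (forall x, ~ E x x).

Definition countably_infinite : Prop :=
  exists h : nat -> V,
    (forall n m, h n = h m -> n = m) /\ (forall v, exists n, h n = v).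

Definition connected : Prop :=
  forall x y, clos_refl_trans V E x y.

Definition finite_set (A : V -> Prop) : Prop :=
  exists l : list V, forall x, A x <-> In x l.

(* f (restricted to A) is a homomorphism from G[A] to G[B] *)
Definition hom_on (A B : V -> Prop) (f : V -> V) : Prop :=
  (forall x, A x -> B (f x)) /\
  (forall x y, A x -> A y -> E x y -> E (f x) (f y)).

Definition mono_on (A B : V -> Prop) (f : V -> V) : Prop :=
  hom_on A B f /\ (forall x y, A x -> A y -> f x = f y -> x = y).

Definition endomorphism (g : V -> V) : Prop :=
  forall x y, E x y -> E (g x) (g y).

Definition surjective_map (g : V -> V) : Prop := forall y, exists x, g x = y.
Definition injective_map (g : V -> V) : Prop := forall x y, g x = g y -> x = y.

Definition bimorphism (g : V -> V) : Prop :=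
  endomorphism g /\ injective_map g /\ surjective_map g.

Definition HE_homogeneous : Prop :=
  forall (A B : V -> Prop) (f : V -> V),
    finite_set A -> finite_set B -> hom_on A B f ->
    exists g, endomorphism g /\ surjective_map g /\ (forall x, A x -> g x = f x).

Definition MB_homogeneous : Prop :=
  forall (A B : V -> Prop) (f : V -> V),
    finite_set A -> finite_set B -> mono_on A B f ->
    exists g, bimorphism g /\ (forall x, A x -> g x = f x).
End Graphs.

(* Main.v *)
Require Import Defs.
From Stdlib Require Import List Relations.
From Stdlib Require Import Classical ClassicalEpsilon FinFun Lia PeanoNat.

Lemma filt_ex {V : Type} (P : V -> Prop) (l : list V) :
  exists l', forall x, In x l' <-> In x l /\ P x.
Proof.
  induction l as [|a l [l' Hl']].
  - exists nil; simpl; tauto.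
  - destruct (classic (P a)) as [Ha|Ha].
    + exists (a :: l'); intro x; simpl; rewrite Hl'; split.
      * intros [<-|H]; tauto.
      * intros [[<-|H] HP]; tauto.
    + exists l'; intro x; simpl; rewrite Hl'; split.
      * tauto.
      * intros [[<-|H] HP]; tauto.
Qed.

Lemma fin_list {V : Type} (l : list V) : finite_set (fun x => In x l).
Proof. exists l; intro; tauto. Qed.

Lemma keyL {V : Type} {E : V -> V -> Prop} :
  simple_graph E -> HE_homogeneous E ->
  forall k (lZ : list V), (forall z, In z lZ -> E k z) ->
  forall d, E k d -> ~ In d lZ ->
  exists c, E c k /\ forall z, In z lZ -> E c z.
Proof.
  intros [Hsym Hirr] HE k lZ HZ d Hkd Hd.
  set (f := fun x => if excluded_middle_informative (x = d) then k else x).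
  destruct (HE (fun x => In x (d :: lZ)) (fun x => In x (k :: lZ)) f
              (fin_list (d :: lZ)) (fin_list (k :: lZ))) as [g [Hg [_ Hgf]]].
  - split.
    + intros x Hx; unfold f; destruct (excluded_middle_informative (x = d)).
      * left; reflexivity.
      * right; destruct Hx; [congruence|assumption].
    + intros x y Hx Hy Hxy; unfold f.
      destruct (excluded_middle_informative (x = d)), (excluded_middle_informative (y = d)); subst.
      * exfalso; exact (Hirr _ Hxy).
      * apply HZ; destruct Hy; [congruence|assumption].
      * apply Hsym, HZ; destruct Hx; [congruence|assumption].
      * exact Hxy.
  - exists (g k); split.
    + pose proof (Hg _ _ Hkd) as H. rewrite (Hgf d) in H by (left; reflexivity).
      unfold f in H; destruct (excluded_middle_informative (d = d)); [exact H|congruence].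
    + intros z Hz. pose proof (Hg _ _ (HZ z Hz)) as H.
      rewrite (Hgf z) in H by (right; exact Hz).
      unfold f in H; destruct (excluded_middle_informative (z = d)); [subst; contradiction|exact H].
Qed.

Lemma infdeg {V : Type} {E : V -> V -> Prop} :
  simple_graph E -> countably_infinite V -> connected E -> HE_homogeneous E ->
  forall s (l : list V), exists d, E s d /\ ~ In d l.
Proof.
  intros Hs Hci Hc HE s l.
  destruct (classic (exists d, E s d /\ ~ In d l)) as [H|H]; [exact H|exfalso].
  assert (Hin : forall d, E s d -> In d l).
  { intros d Hd; destruct (classic (In d l)); auto; exfalso; apply H; eauto. }
  pose proof Hs as [Hsym Hirr].
  assert (Hcl : forall d d', E s d -> E s d' -> d <> d' -> E d d').
  { intros d d' Hd Hd' Hne.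
    destruct (filt_ex (fun x => E s x /\ x <> d) l) as [lZ HlZ].
    assert (HZ : forall z, In z lZ -> E s z) by (intros z Hz; apply HlZ in Hz; tauto).
    assert (Hnd : ~ In d lZ) by (intro Hz; apply HlZ in Hz; tauto).
    destruct (keyL Hs HE s lZ HZ d Hd Hnd) as [c [Hcs Hcz]].
    { destruct (classic (c = d)) as [->|Hcd].
      + apply Hcz, HlZ; auto.
      + exfalso; apply (Hirr c), Hcz, HlZ; split; auto. } }
  assert (Hclo : forall p q, E s p -> E p q -> q = s \/ E s q).
  { intros p q Hp Hq.
    destruct (classic (q = s \/ E s q)) as [Hn|Hn]; [exact Hn|exfalso].
    destruct (filt_ex (fun x => x = s \/ (E s x /\ x <> p)) (s :: l)) as [lZ HlZ].
    assert (HZ : forall z, In z lZ -> E p z).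
    { intros z Hz; apply HlZ in Hz as [_ [->|[Hz1 Hz2]]].
      + apply Hsym; exact Hp.
      + apply Hcl; auto. }
    assert (Hnq : ~ In q lZ) by (intro Hz; apply HlZ in Hz as [_ Hz]; tauto).
    destruct (keyL Hs HE p lZ HZ q Hq Hnq) as [c [Hcp Hcz]].
    { assert (Hcs : E s c) by (apply Hsym, Hcz, HlZ; split; [left; reflexivity|left; reflexivity]).
      destruct (classic (c = p)) as [->|Hcp'].
      + exact (Hirr _ Hcp).
      + apply (Hirr c), Hcz, HlZ; split; [right; apply Hin; exact Hcs|right; auto]. } }
  assert (Hall : forall y, y = s \/ E s y).
  { intro y. pose proof (clos_rt_rtn1 _ _ _ _ (Hc s y)) as Hr.
    induction Hr as [|y z Hyz _ IH]; [left; reflexivity|].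
    destruct IH as [->|Hy]; [right; exact Hyz|].
    exact (Hclo _ _ Hy Hyz). }
  destruct Hci as [h [Hinj _]].
  assert (Hincl : incl (map h (seq 0 (S (length (s :: l))))) (s :: l)).
  { intros x Hx. destruct (Hall x) as [->|Hx']; [left; reflexivity|right; apply Hin; exact Hx']. }
  apply NoDup_incl_length in Hincl.
  - rewrite length_map, length_seq in Hincl; lia.
  - apply Injective_map_NoDup; [exact Hinj|apply seq_NoDup].
Qed.

Lemma forthL {V : Type} {E : V -> V -> Prop} :
  simple_graph E -> countably_infinite V -> connected E -> HE_homogeneous E ->
  forall (lX : list V) k, (forall x, In x lX -> E k x) ->
  forall F : list V, exists c, (forall x, In x lX -> E c x) /\ ~ In c F.
Proof.
  intros Hs Hci Hc HE lX k HX F.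
  pose proof Hs as [Hsym Hirr].
  destruct (filt_ex (fun x => E k x) F) as [lF HlF].
  destruct (infdeg Hs Hci Hc HE k (lX ++ lF)) as [d [Hkd Hd]].
  assert (HZ : forall z, In z (lX ++ lF) -> E k z).
  { intros z Hz; apply in_app_or in Hz as [Hz|Hz]; [auto|apply HlF in Hz; tauto]. }
  destruct (keyL Hs HE k (lX ++ lF) HZ d Hkd Hd) as [c [Hck Hcz]].
  exists c; split.
    + intros x Hx; apply Hcz, in_or_app; left; exact Hx.
    + intro HcF. apply (Hirr c), Hcz, in_or_app; right; apply HlF; split; auto.
Qed.

Definition inv {V : Type} (E : V -> V -> Prop) (D : list V) (phi : V -> V) : Prop :=
  (forall a b, In a D -> In b D -> E a b -> E (phi a) (phi b)) /\
  (forall a b, In a D -> In b D -> phi a = phi b -> a = b).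

Definition extends {V : Type} (D : list V) (phi : V -> V) (D' : list V) (phi' : V -> V) :=
  forall a, In a D -> In a D' /\ phi' a = phi a.

Lemma forth_ex {V : Type} {E : V -> V -> Prop} :
  simple_graph E -> countably_infinite V -> connected E -> HE_homogeneous E ->
  forall D phi, inv E D phi -> forall v,
  exists D' phi', inv E D' phi' /\ extends D phi D' phi' /\ In v D'.
Proof.
  intros Hs Hci Hc HE D phi [Hh Hi] v.
  pose proof Hs as [Hsym Hirr].
  destruct (classic (In v D)) as [Hv|Hv].
  { exists D, phi; repeat split; auto. }
  destruct (HE (fun x => In x D) (fun x => In x (map phi D)) phi (fin_list D) (fin_list _))
    as [g [Hg [_ Hgf]]].
  { split; [intros x Hx; apply in_map; exact Hx|exact Hh]. }
  set (k := g v).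
  destruct (filt_ex (fun y => E k y) (map phi D)) as [lX HlX].
  assert (HX : forall x, In x lX -> E k x) by (intros x Hx; apply HlX in Hx; tauto).
  destruct (forthL Hs Hci Hc HE lX k HX (map phi D)) as [c [Hcx HcF]].
  assert (Hadj : forall b, In b D -> E v b -> E c (phi b)).
  { intros b Hb Hvb. apply Hcx, HlX; split; [apply in_map; exact Hb|].
    rewrite <- (Hgf b Hb); apply Hg; exact Hvb. }
  set (phi' := fun x => if excluded_middle_informative (x = v) then c else phi x).
  exists (v :: D), phi'.
  assert (Hp1 : phi' v = c) by (unfold phi'; destruct (excluded_middle_informative (v = v)); congruence).
  assert (Hp2 : forall a, In a D -> phi' a = phi a).
  { intros a Ha; unfold phi'; destruct (excluded_middle_informative (a = v)) as [Hav|Hav]; [rewrite Hav in Ha; contradiction|reflexivity]. }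
  split; [split|split].
  - intros a b [<-|Ha] [<-|Hb] Hab.
    + exfalso; exact (Hirr _ Hab).
    + rewrite Hp1, Hp2 by exact Hb; apply Hadj; auto.
    + rewrite Hp1, Hp2 by exact Ha; apply Hsym, Hadj; auto.
    + rewrite !Hp2 by assumption; apply Hh; auto.
  - intros a b [<-|Ha] [<-|Hb] Hab; auto.
    + rewrite Hp1, Hp2 in Hab by exact Hb. exfalso; apply HcF; rewrite Hab; apply in_map; exact Hb.
    + rewrite Hp1, Hp2 in Hab by exact Ha. exfalso; apply HcF; rewrite <- Hab; apply in_map; exact Ha.
    + rewrite !Hp2 in Hab by assumption; apply Hi; auto.
  - intros a Ha; split; [right; exact Ha|apply Hp2; exact Ha].
  - left; reflexivity.
Qed.

Lemma back_ex {V : Type} {E : V -> V -> Prop} :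
  simple_graph E -> HE_homogeneous E ->
  forall D phi, inv E D phi -> forall w,
  exists D' phi', inv E D' phi' /\ extends D phi D' phi' /\ exists a, In a D' /\ phi' a = w.
Proof.
  intros Hs HE D phi [Hh Hi] w.
  pose proof Hs as [Hsym Hirr].
  destruct (classic (exists a, In a D /\ phi a = w)) as [Hw|Hw].
  { exists D, phi; repeat split; auto. }
  destruct (HE (fun x => In x D) (fun x => In x (map phi D)) phi (fin_list D) (fin_list _))
    as [g [Hg [Hsur Hgf]]].
  { split; [intros x Hx; apply in_map; exact Hx|exact Hh]. }
  destruct (Hsur w) as [x Hx].
  assert (HxD : ~ In x D) by (intro HxD; apply Hw; exists x; split; [exact HxD|rewrite <- Hgf; auto]).
  assert (Hadj : forall b, In b D -> E x b -> E w (phi b)).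
  { intros b Hb Hxb. rewrite <- Hx, <- (Hgf b Hb); apply Hg; exact Hxb. }
  set (phi' := fun y => if excluded_middle_informative (y = x) then w else phi y).
  exists (x :: D), phi'.
  assert (Hp1 : phi' x = w) by (unfold phi'; destruct (excluded_middle_informative (x = x)); congruence).
  assert (Hp2 : forall a, In a D -> phi' a = phi a).
  { intros a Ha; unfold phi'; destruct (excluded_middle_informative (a = x)) as [Hav|Hav]; [rewrite Hav in Ha; contradiction|reflexivity]. }
  split; [split|split].
  - intros a b [<-|Ha] [<-|Hb] Hab.
    + exfalso; exact (Hirr _ Hab).
    + rewrite Hp1, Hp2 by exact Hb; apply Hadj; auto.
    + rewrite Hp1, Hp2 by exact Ha; apply Hsym, Hadj; auto.
    + rewrite !Hp2 by assumption; apply Hh; auto.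
  - intros a b [<-|Ha] [<-|Hb] Hab; auto.
    + rewrite Hp1, Hp2 in Hab by exact Hb. exfalso; apply Hw; exists b; auto.
    + rewrite Hp1, Hp2 in Hab by exact Ha. exfalso; apply Hw; exists a; auto.
    + rewrite !Hp2 in Hab by assumption; apply Hi; auto.
  - intros a Ha; split; [right; exact Ha|apply Hp2; exact Ha].
  - exists x; split; [left; reflexivity|exact Hp1].
Qed.

Lemma bf {V : Type} (P : list V -> (V -> V) -> Prop) (e : nat -> V)
  (Hstep : forall D phi n, P D phi -> exists D' phi', P D' phi' /\ extends D phi D' phi' /\
       In (e n) D' /\ exists a, In a D' /\ phi' a = e n)
  D0 phi0 (H0 : P D0 phi0) :
  exists (Ds : nat -> list V) (phis : nat -> V -> V),
    (forall n, P (Ds n) (phis n)) /\ Ds 0 = D0 /\ phis 0 = phi0 /\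
    (forall n, extends (Ds n) (phis n) (Ds (S n)) (phis (S n))) /\
    (forall n, In (e n) (Ds (S n)) /\ exists a, In a (Ds (S n)) /\ phis (S n) a = e n).
Proof.
  set (St := {p : list V * (V -> V) | P (fst p) (snd p)}).
  assert (Hs' : forall n (s : St), exists s' : St,
     extends (fst (proj1_sig s)) (snd (proj1_sig s)) (fst (proj1_sig s')) (snd (proj1_sig s')) /\
     In (e n) (fst (proj1_sig s')) /\ exists a, In a (fst (proj1_sig s')) /\ snd (proj1_sig s') a = e n).
  { intros n [[D phi] HP]. simpl in HP.
    destruct (Hstep D phi n HP) as [D' [phi' [HP' R]]].
    exists (exist _ (D', phi') HP'); exact R. }
  set (step := fun n s => proj1_sig (constructive_indefinite_description _ (Hs' n s))).
  assert (HstepP : forall n s, let s' := step n s in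
     extends (fst (proj1_sig s)) (snd (proj1_sig s)) (fst (proj1_sig s')) (snd (proj1_sig s')) /\
     In (e n) (fst (proj1_sig s')) /\ exists a, In a (fst (proj1_sig s')) /\ snd (proj1_sig s') a = e n).
  { intros n s; unfold step; exact (proj2_sig (constructive_indefinite_description _ (Hs' n s))). }
  set (s0 := exist (fun p => P (fst p) (snd p)) (D0, phi0) H0 : St).
  set (sq := fix sq n := match n with O => s0 | S m => step m (sq m) end).
  exists (fun n => fst (proj1_sig (sq n))), (fun n => snd (proj1_sig (sq n))).
  split; [|split; [reflexivity|split; [reflexivity|split]]].
  - intro n; exact (proj2_sig (sq n)).
  - intro n; exact (proj1 (HstepP n (sq n))).
  - intro n; exact (proj2 (HstepP n (sq n))).
Qed.

Lemma ext_mono {V : Type} (Ds : nat -> list V) (phis : nat -> V -> V)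
  (Hext : forall n, extends (Ds n) (phis n) (Ds (S n)) (phis (S n))) :
  forall n m, n <= m -> forall a, In a (Ds n) -> In a (Ds m) /\ phis m a = phis n a.
Proof.
  intros n m Hnm; induction Hnm as [|m Hnm IH]; intros a Ha.
  - split; auto.
  - destruct (IH a Ha) as [H1 H2]. destruct (Hext m a H1) as [H3 H4].
    split; [exact H3|congruence].
Qed.

Theorem lemma8p1 (V : Type) (E : V -> V -> Prop) :
  simple_graph E -> countably_infinite V -> connected E ->
  HE_homogeneous E -> MB_homogeneous E.
Proof.
  intros Hs Hci Hc HE A B f [lA HlA] _ [[HfB Hfh] Hfi].
  pose proof Hci as [e [_ Hsur]].
  assert (H0 : inv E lA f).
  { split; intros a b Ha Hb; apply HlA in Ha; apply HlA in Hb; auto. }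
  assert (Hstep : forall D phi n, inv E D phi -> exists D' phi', inv E D' phi' /\ extends D phi D' phi' /\
       In (e n) D' /\ exists a, In a D' /\ phi' a = e n).
  { intros D phi n HP.
    destruct (forth_ex Hs Hci Hc HE D phi HP (e n)) as [D1 [phi1 [HP1 [Hx1 Hin1]]]].
    destruct (back_ex Hs HE D1 phi1 HP1 (e n)) as [D2 [phi2 [HP2 [Hx2 Hb2]]]].
    exists D2, phi2; split; [exact HP2|split; [|split; [apply Hx2; exact Hin1|exact Hb2]]].
    intros a Ha. destruct (Hx1 a Ha) as [Ha1 Hq1]. destruct (Hx2 a Ha1) as [Ha2 Hq2].
    split; [exact Ha2|congruence]. }
  destruct (bf (inv E) e Hstep lA f H0) as [Ds [phis [HP [HD0 [Hph0 [Hext Hgoal]]]]]].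
  pose proof (ext_mono Ds phis Hext) as Hmono.
  set (idx := fun v => proj1_sig (constructive_indefinite_description _ (Hsur v))).
  assert (Hidx : forall v, e (idx v) = v).
  { intro v; unfold idx; exact (proj2_sig (constructive_indefinite_description _ (Hsur v))). }
  assert (HinD : forall v, In v (Ds (S (idx v)))).
  { intro v; rewrite <- (Hidx v) at 1; apply Hgoal. }
  set (g := fun v => phis (S (idx v)) v).
  assert (Hg : forall v m, In v (Ds m) -> g v = phis m v).
  { intros v m Hv. unfold g.
    destruct (Hmono (S (idx v)) (Nat.max m (S (idx v)))) with (a := v) as [_ H1]; [lia|apply HinD|].
    destruct (Hmono m (Nat.max m (S (idx v)))) with (a := v) as [_ H2]; [lia|exact Hv|].
    congruence. }
  assert (Hboth : forall x y, exists m, In x (Ds m) /\ In y (Ds m)).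
  { intros x y. exists (Nat.max (S (idx x)) (S (idx y))). split.
    - apply (Hmono (S (idx x))); [lia|apply HinD].
    - apply (Hmono (S (idx y))); [lia|apply HinD]. }
  exists g; split; [split; [|split]|].
  - intros x y Hxy. destruct (Hboth x y) as [m [Hx Hy]].
    rewrite (Hg x m Hx), (Hg y m Hy). apply (proj1 (HP m)); auto.
  - intros x y Hxy. destruct (Hboth x y) as [m [Hx Hy]].
    rewrite (Hg x m Hx), (Hg y m Hy) in Hxy. apply (proj2 (HP m)); auto.
  - intro y. destruct (Hgoal (idx y)) as [_ [a [Ha Hay]]].
    exists a. rewrite (Hg a _ Ha), Hay. apply Hidx.
  - intros x Hx. apply HlA in Hx. rewrite <- HD0 in Hx.
    rewrite (Hg x 0 Hx), Hph0. reflexivity.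
Qed.
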